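(* Under the full-support assumption and with $\eta L<\tfrac12$, for every $t\ge1$, \[ \Theta_t-\Theta_{t+1}\ge C_1\max\{\hat K^{(t+1)},K^{(t+1)}\}^2,\qquad C_1=\frac{1-4\eta^2L^2}{(\sqrt2\,\eta L+2e^{2\eta L})^2}. \]
   Context: $\mathbb{A}$ finite, $\Delta(\mathbb{A})$ the simplex, $\bm P$ skew-symmetric, $L=\max_{a,a'}|P_{a,a'}|$. $\mathbb{M}$: Nash equilibria, i.e. ${\bm\pi}\in\Delta(\mathbb{A})$ with $\max_a(\bm P{\bm\pi})_a\le0$. Full-support assumption: every $a$ has some ${\bm\pi}\in\mathbb{M}$ with $\pi_a>0$. $p({\bm\pi})=\arg\min_{{\bm\pi}'\in\mathbb{M}}D_{\mathrm{KL}}({\bm\pi}'\|{\bm\pi})$ for positive ${\bm\pi}$. OMWU with $\eta>0$: $\hat{\bm\pi}^{(1)}$ positive, ${\bm\pi}^{(0)}=\hat{\bm\pi}^{(1)}$, for $t\ge1$ $\pi^{(t)}_a\propto\hat\pi^{(t)}_a e^{\eta(\bm P{\bm\pi}^{(t-1)})_a}$, $\hat\pi^{(t+1)}_a\propto\hat\pi^{(t)}_a e^{\eta(\bm P{\bm\pi}^{(t)})_a}$ (normalized). ${\bm\pi}^*=p(\hat{\bm\pi}^{(1)})$. $\Theta_t=D_{\mathrm{KL}}({\bm\pi}^*\|\hat{\bm\pi}^{(t)})+4\eta^2L^2D_{\mathrm{KL}}(\hat{\bm\pi}^{(t)}\|{\bm\pi}^{(t-1)})$. $K^{(t)}=\max_a\hat\pi^{(t)}_a|\eta(\bm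 P{\bm\pi}^{(t-1)})_a|$ (so $K^{(t+1)}=\max_a\hat\pi^{(t+1)}_a|\eta(\bm P{\bm\pi}^{(t)})_a|$), $\hat K^{(t+1)}=\max_a\hat\pi^{(t)}_a|\eta(\bm P{\bm\pi}^{(t)})_a|$. *)

(* Defs.v *)
From mathcomp Require Import all_boot all_order all_algebra.
From mathcomp Require Import all_classical all_reals all_analysis.
Set Implicit Arguments. Unset Strict Implicit. Unset Printing Implicit Defensive.
Import Order.TTheory GRing.Theory Num.Theory.
Local Open Scope ring_scope.

Section Defs.
Variables (R : realType) (A : finType).

Definition in_simplex (p : A -> R) : Prop :=
  (forall a, 0 <= p a) /\ \sum_a p a = 1.

Definition positive_dist (p : A -> R) : Prop :=
  in_simplex p /\ forall a, 0 < p a.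

Definition Pmul (P : A -> A -> R) (p : A -> R) (a : A) : R :=
  \sum_b P a b * p b.

Definition skew_sym (P : A -> A -> R) : Prop := forall a b, P a b = - P b a.

Definition Lmax (P : A -> A -> R) : R :=
  \big[Num.max/0]_(a : A) \big[Num.max/0]_(b : A) `|P a b|.

Definition nash (P : A -> A -> R) (p : A -> R) : Prop :=
  in_simplex p /\ forall a, Pmul P p a <= 0.

Definition full_support (P : A -> A -> R) : Prop :=
  forall a, exists p, nash P p /\ 0 < p a.

(* KL divergence D_KL(p || q) = sum_a p_a ln (p_a / q_a)  (terms with p_a = 0 vanish) *)
Definition KL (p q : A -> R) : R := \sum_a p a * ln (p a / q a).

Definition mwu (eta : R) (q g : A -> R) (a : A) : R :=
  q a * expR (eta * g a) / \sum_b q b * expR (eta * g b).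

(* omwu_state n = (hatpi^(n+1), pi^(n)) *)
Fixpoint omwu_state (P : A -> A -> R) (eta : R) (h1 : A -> R) (n : nat)
  : (A -> R) * (A -> R) :=
  match n with
  | 0 => (h1, h1)
  | n'.+1 =>
      let (hat, prev) := omwu_state P eta h1 n' in
      let cur := mwu eta hat (Pmul P prev) in
      (mwu eta hat (Pmul P cur), cur)
  end.

(* hatpi t = \hat\pi^{(t)} for t >= 1 (index 0 unused) *)
Definition hatpi P eta h1 (t : nat) : A -> R := (omwu_state P eta h1 t.-1).1.
Definition pit P eta h1 (t : nat) : A -> R := (omwu_state P eta h1 t).2.

Definition Theta P eta h1 (pistar : A -> R) (t : nat) : R :=
  KL pistar (hatpi P eta h1 t)
  + 4 * eta ^+ 2 * Lmax P ^+ 2 * KL (hatpi P eta h1 t) (pit P eta h1 t.-1).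

Definition Kt P eta h1 (t : nat) : R :=
  \big[Num.max/0]_(a : A)
    (hatpi P eta h1 t a * `|eta * Pmul P (pit P eta h1 t.-1) a|).

(* \hat K^{(t+1)} = max_a hatpi^(t)_a |eta (P pi^(t))_a| ; argument is t+1 *)
Definition Khat P eta h1 (t1 : nat) : R :=
  \big[Num.max/0]_(a : A)
    (hatpi P eta h1 t1.-1 a * `|eta * Pmul P (pit P eta h1 t1.-1) a|).

End Defs.

(* Main.v *)
Require Import Defs.
From mathcomp Require Import all_boot all_order all_algebra.
From mathcomp Require Import all_classical all_reals all_analysis.
From mathcomp Require Import ring lra.
Import Order.TTheory GRing.Theory Num.Theory.
Local Open Scope ring_scope.

Local Open Scope classical_set_scope.
Section Calc.
Variable R : realType.
Implicit Types (f g : R -> R) (x : R).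

Lemma dM f g x df dg : is_derive x 1 f df -> is_derive x 1 g dg ->
  is_derive x 1 (fun r => f r * g r) (f x * dg + g x * df).
Proof. move=> a b; exact: (is_deriveM a b). Qed.

Lemma dD f g x df dg : is_derive x 1 f df -> is_derive x 1 g dg ->
  is_derive x 1 (fun r => f r + g r) (df + dg).
Proof. move=> a b; exact: (is_deriveD a b). Qed.

Lemma dB f g x df dg : is_derive x 1 f df -> is_derive x 1 g dg ->
  is_derive x 1 (fun r => f r - g r) (df - dg).
Proof. move=> a b; exact: (is_deriveB a b). Qed.

Lemma dC (c x : R) : is_derive x 1 (fun _ : R => c) 0.
Proof. exact: is_derive_cst. Qed.

Lemma dI (x : R) : is_derive x 1 (fun r : R => r) 1.
Proof. exact: is_derive_id. Qed.

Lemma dL x : 0 < x -> is_derive x 1 (@ln R) x^-1.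
Proof. exact: is_derive1_ln. Qed.

Lemma dE f x df : is_derive x 1 f df -> is_derive x 1 (fun r => expR (f r)) (expR (f x) * df).
Proof. move=> a; exact: (is_derive1_comp (f:=expR) (g:=f)). Qed.

Lemma dV f x df : f x != 0 -> is_derive x 1 f df ->
  is_derive x 1 (fun r => (f r)^-1) (- (f x) ^- 2 * df).
Proof. move=> a b; exact: (is_deriveV a b). Qed.

Lemma dEq f x df df' : is_derive x 1 f df -> df = df' -> is_derive x 1 f df'.
Proof. by move=> ? <-. Qed.

Lemma mono_deriv f df (a b : R) : a <= b ->
  (forall x, a <= x <= b -> is_derive x 1 f (df x)) ->
  (forall x, a < x < b -> 0 <= df x) -> f a <= f b.
Proof.
move=> ab hd hp; case: (ltgtP a b) ab => // [altb|<-] _; last by [].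
have hd' : forall x, x \in `]a, b[%R -> is_derive x 1 f (df x).
  by move=> x; rewrite in_itv /= => /andP[/ltW ? /ltW ?]; apply: hd; apply/andP.
rewrite -subr_ge0; have [|c cab ->] := MVT altb hd'.
  apply: derivable_within_continuous => x; rewrite in_itv /= => xi.
  by have [] := hd x xi.
by rewrite mulr_ge0 ?subr_ge0 ?(ltW altb)// hp//; move: cab; rewrite in_itv.
Qed.

Arguments dM {f g x df dg}.
Arguments dD {f g x df dg}.
Arguments dB {f g x df dg}.
Arguments dE {f x df}.
Arguments dV {f x df}.
Arguments dEq {f x df df'}.
Arguments dL {x}.

Lemma ln_ge_1subV x : 0 < x -> 1 - x^-1 <= ln x.
Proof.
move=> x0; have := expR_ge1Dx (ln x^-1).
rewrite lnK ?posrE ?invr_gt0// lnV ?posrE//; lra.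
Qed.

Definition gfun (r : R) := (r + 1) * ln r - 2 * (r - 1).

Lemma gfun_der x : 0 < x -> is_derive x 1 gfun (ln x + x^-1 - 1).
Proof.
move=> x0.
have H := dB (dM (dD (dI x) (dC 1 x)) (dL x0)) (dM (dC 2 x) (dB (dI x) (dC 1 x))).
refine (dEq H _).
have xn0 : x != 0 by rewrite gt_eqF.
by field.
Qed.

Lemma gfun_sign x : 0 < x -> (1 <= x -> 0 <= gfun x) /\ (x <= 1 -> gfun x <= 0).
Proof.
move=> x0; split => hx.
- have -> : 0 = gfun 1 by rewrite /gfun ln1; lra.
  apply: (@mono_deriv gfun (fun r => ln r + r^-1 - 1)) => //.
    by move=> y /andP[y1 _]; apply: gfun_der; lra.
  move=> y /andP[y1 _]; have y0 : 0 < y by lra.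
  have := @ln_ge_1subV y y0; lra.
- have -> : 0 = gfun 1 by rewrite /gfun ln1; lra.
  apply: (@mono_deriv gfun (fun r => ln r + r^-1 - 1)) => //.
    by move=> y /andP[y1 _]; apply: gfun_der; lra.
  move=> y /andP[y1 _]; have y0 : 0 < y by lra.
  have := @ln_ge_1subV y y0; lra.
Qed.

Definition Ffun (r : R) := (2 * r + 4) * (r * ln r - r + 1) - 3 * ((r - 1) * (r - 1)).

Lemma Ffun_der x : 0 < x -> is_derive x 1 Ffun (4 * gfun x).
Proof.
move=> x0.
have H := dB (dM (dD (dM (dC 2 x) (dI x)) (dC 4 x))
                 (dD (dB (dM (dI x) (dL x0)) (dI x)) (dC 1 x)))
             (dM (dC 3 x) (dM (dB (dI x) (dC 1 x)) (dB (dI x) (dC 1 x)))).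
apply: (dEq H).
rewrite /gfun.
have xn0 : x != 0 by rewrite gt_eqF.
by field.
Qed.

Lemma Ffun_ge0 x : 0 < x -> 0 <= Ffun x.
Proof.
move=> x0; have F1 : Ffun 1 = 0 by rewrite /Ffun ln1; lra.
case: (lerP 1 x) => hx.
- rewrite -F1; apply: (@mono_deriv Ffun (fun r => 4 * gfun r)).
  + exact: hx.
  + move=> y /andP[y1 _]; apply: Ffun_der; lra.
  + move=> y /andP[y1 _]; have y0 : 0 < y by lra.
    have [h _] := @gfun_sign y y0; have := h (ltW y1); lra.
- suff : - Ffun x <= - Ffun 1 by rewrite F1; lra.
  apply: (@mono_deriv (fun r => - Ffun r) (fun r => - (4 * gfun r))).
  + exact: ltW.
  + move=> y /andP[y1 _]; apply: is_deriveN; apply: Ffun_der; lra.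
  + move=> y /andP[y1 y2]; have y0 : 0 < y by lra.
    have [_ h] := @gfun_sign y y0; have := h (ltW y2); lra.
Qed.
End Calc.
Local Close Scope classical_set_scope.

Section Pin.
Variable R : realType.

Lemma pinsker_term (p q : R) : 0 < p -> 0 < q ->
  3 * (p - q) ^+ 2 <= 2 * (p + 2 * q) * (p * ln (p / q) - p + q).
Proof.
move=> p0 q0.
have r0 : 0 < p / q by rewrite divr_gt0.
have := @Ffun_ge0 R _ r0; rewrite /Ffun => h.
have qn0 : q != 0 by rewrite gt_eqF.
have e1 : 3 * (p - q) ^+ 2 = q ^+ 2 * (3 * ((p / q - 1) * (p / q - 1))) by field.
have e2 : 2 * (p + 2 * q) * (p * ln (p / q) - p + q) =
   q ^+ 2 * ((2 * (p / q) + 4) * (p / q * ln (p / q) - p / q + 1)) by field.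
rewrite e1 e2; apply: ler_wpM2l; first by rewrite sqr_ge0.
lra.
Qed.

Variable A : finType.

Lemma cauchy_schwarz (u v : A -> R) : (forall a, 0 < v a) ->
  (\sum_a u a) ^+ 2 <= (\sum_a v a) * (\sum_a u a ^+ 2 / v a).
Proof.
move=> vp.
have h : 0 <= \sum_a \sum_b (v b * (u a ^+ 2 / v a) + v a * (u b ^+ 2 / v b)
                               - 2 * (u a * u b)).
  apply: sumr_ge0 => a _; apply: sumr_ge0 => b _.
  have va := vp a; have vb := vp b.
  have -> : v b * (u a ^+ 2 / v a) + v a * (u b ^+ 2 / v b) - 2 * (u a * u b)
     = v a * v b * (u a / v a - u b / v b) ^+ 2.
    by field; apply/andP; split; rewrite gt_eqF.
  by rewrite mulr_ge0 ?sqr_ge0 // mulr_ge0 // ltW.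
have e : \sum_a \sum_b (v b * (u a ^+ 2 / v a) + v a * (u b ^+ 2 / v b)
                               - 2 * (u a * u b))
   = 2 * ((\sum_a v a) * (\sum_a u a ^+ 2 / v a)) - 2 * (\sum_a u a) ^+ 2.
  transitivity (\sum_a ((\sum_b v b) * (u a ^+ 2 / v a) + v a * (\sum_b u b ^+ 2 / v b)
                - 2 * (u a * \sum_b u b))).
    apply: eq_bigr => a _.
    rewrite sumrB big_split /= -mulr_suml -mulr_sumr -mulr_sumr -mulr_sumr.
    by [].
  rewrite sumrB big_split /= -mulr_sumr -mulr_suml -mulr_sumr -mulr_suml expr2; ring.
lra.
Qed.

Definition KLd (p q : A -> R) := \sum_a p a * ln (p a / q a).

Lemma pinsker (p q : A -> R) : (forall a, 0 < p a) -> (forall a, 0 < q a) ->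
  \sum_a p a = 1 -> \sum_a q a = 1 ->
  (\sum_a `|p a - q a|) ^+ 2 <= 2 * KLd p q.
Proof.
move=> pp qp p1 q1.
apply: le_trans (@cauchy_schwarz (fun a => `|p a - q a|) (fun a => p a + 2 * q a) _) _.
  by move=> a; have := pp a; have := qp a; lra.
rewrite big_split /= -mulr_sumr p1 q1.
have -> : 2 * KLd p q = \sum_a 2 * (p a * ln (p a / q a) - p a + q a).
  rewrite -mulr_sumr /KLd !big_split /= sumrN p1 q1; ring.
rewrite mulr_sumr; apply: ler_sum => a _.
have pa := pp a; have qa := qp a.
have vp : 0 < p a + 2 * q a by lra.
rewrite real_normK ?num_real //.
have := @pinsker_term (p a) (q a) pa qa.
set K := (_ * ln _ - _ + _).
set X := (p a - q a) ^+ 2.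
move=> h.
have -> : (1 + 2 * 1) * (X / (p a + 2 * q a)) = (3 * X) / (p a + 2 * q a).
  by rewrite mulrA; congr (_ * _ / _); lra.
rewrite ler_pdivrMr //.
by rewrite mulrAC.
Qed.
End Pin.

Arguments dM {R f g x df dg}.
Arguments dD {R f g x df dg}.
Arguments dB {R f g x df dg}.
Arguments dE {R f x df}.
Arguments dV {R f x df}.
Arguments dEq {R f x df df'}.
Arguments dL {R x}.
Arguments dC {R}.
Arguments dI {R}.
Section Tilt.
Variable R : realType.

Lemma d_sum (T : Type) (s : seq T) (F : T -> R -> R) (dF : T -> R) (x : R) :
  (forall i, is_derive x 1 (F i) (dF i)) ->
  is_derive x 1 (fun r => \sum_(i <- s) F i r) (\sum_(i <- s) dF i).
Proof.
move=> hF; elim: s => [|i s IH].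
  have -> : (fun r => \sum_(i <- [::]) F i r) = (fun _ => 0).
    by apply/funext => r; rewrite big_nil.
  by rewrite big_nil; exact: dC.
have -> : (fun r => \sum_(j <- i :: s) F j r) = (fun r => F i r + \sum_(j <- s) F j r).
  by apply/funext => r; rewrite big_cons.
by rewrite big_cons; exact: (dD (hF i) IH).
Qed.

Variable A : finType.

Lemma tilt_var (p w : A -> R) (M : R) :
  (forall a, 0 < p a) -> \sum_a p a = 1 -> (forall a, `|w a| <= M) ->
  \sum_a (p a * expR (w a) / (\sum_b p b * expR (w b)) - p a) * w a <= M ^+ 2.
Proof.
move=> pp p1 wM.
pose N := fun s : R => \sum_a p a * w a * expR (s * w a).
pose D := fun s : R => \sum_a p a * expR (s * w a).
pose N2 := fun s : R => \sum_a p a * w a * w a * expR (s * w a).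
have Dp (s : R) : 0 < D s.
  rewrite /D; have [a0 _] : exists a0 : A, true.
    apply/existsP; apply: contraT; rewrite negb_exists => /forallP h.
    move: p1; rewrite big1 //; first by move=> /eqP; rewrite eq_sym oner_eq0.
    by move=> a; have := h a.
  rewrite (bigD1 a0) //=; apply: ltr_pwDl; first by rewrite mulr_gt0 ?expR_gt0.
  by apply: sumr_ge0 => a _; rewrite mulr_ge0 ?expR_ge0 // ltW.
have dN (s : R) : is_derive s 1 N (N2 s).
  rewrite /N /N2; apply: d_sum => a.
  apply: (dEq (dM (dC (p a * w a) s) (dE (dM (dI s) (dC (w a) s))))).
  rewrite /=; ring.
have dDs (s : R) : is_derive s 1 D (N s).
  rewrite /D /N; apply: d_sum => a.
  apply: (dEq (dM (dC (p a) s) (dE (dM (dI s) (dC (w a) s))))).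
  rewrite /=; ring.
pose G := fun s => N s * (D s)^-1.
have dG (s : R) : is_derive s 1 G (N2 s / D s - (N s / D s) ^+ 2).
  have K := dM (dN s) (dV (lt0r_neq0 (Dp s)) (dDs s)). refine (dEq K _).
  have := lt0r_neq0 (Dp s); move=> h; rewrite /=; field; exact: h.
pose H := fun s => M ^+ 2 * s - G s.
have dH (s : R) : is_derive s 1 H (M ^+ 2 - (N2 s / D s - (N s / D s) ^+ 2)).
  apply: (dEq (dB (dM (dC (M ^+ 2) s) (dI s)) (dG s))); rewrite /=; ring.
have : H 0 <= H 1.
  apply: (@mono_deriv R H _ 0 1 ler01 (fun s _ => dH s)) => s _.
  suff : N2 s / D s <= M ^+ 2.
    have := sqr_ge0 (N s / D s); lra.
  rewrite ler_pdivrMr // /N2 /D mulr_sumr; apply: ler_sum => a _.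
  have -> : p a * w a * w a * expR (s * w a) = w a ^+ 2 * (p a * expR (s * w a)) by ring.
  apply: ler_wpM2r; first by rewrite mulr_ge0 ?expR_ge0 // ltW.
  rewrite -real_normK ?num_real //.
  by apply: lerXn2r; rewrite ?nnegrE ?normr_ge0 // (le_trans _ (wM a)).
rewrite /H /G /N /D.
have e0 : \sum_a p a * w a * expR (0 * w a) = \sum_a p a * w a.
  by apply: eq_bigr => a _; rewrite mul0r expR0 mulr1.
have e0' : \sum_a p a * expR (0 * w a) = 1.
  by rewrite -p1; apply: eq_bigr => a _; rewrite mul0r expR0 mulr1.
have e1 : \sum_a p a * w a * expR (1 * w a) = \sum_a p a * w a * expR (w a).
  by apply: eq_bigr => a _; rewrite mul1r.
have e1' : \sum_a p a * expR (1 * w a) = \sum_a p a * expR (w a).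
  by apply: eq_bigr => a _; rewrite mul1r.
rewrite e0 e0' e1 e1' divr1.
have -> : \sum_a (p a * expR (w a) / (\sum_b p b * expR (w b)) - p a) * w a =
   (\sum_a p a * w a * expR (w a)) / (\sum_b p b * expR (w b)) - \sum_a p a * w a.
  rewrite mulr_suml -sumrB; apply: eq_bigr => a _; ring.
lra.
Qed.
End Tilt.

Section Basic.
Variable R : realType.
Variable A : finType.
Implicit Types (F : A -> R) (p q u : A -> R).

Lemma bmax_ge0 F : 0 <= \big[Num.max/0]_(a : A) F a.
Proof.
elim: (index_enum A) => [|b s IH]; first by rewrite big_nil.
by rewrite big_cons le_max IH orbT.
Qed.

Lemma bmax_le F (c : R) : 0 <= c -> (forall a, F a <= c) ->
  \big[Num.max/0]_(a : A) F a <= c.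
Proof. by move=> c0 h; elim/big_ind: _ => // x y hx hy; rewrite ge_max hx hy. Qed.

Lemma bmax_ge F a : F a <= \big[Num.max/0]_(b : A) F b.
Proof.
have : a \in index_enum A by rewrite mem_index_enum.
elim: (index_enum A) => // b s IH; rewrite inE big_cons => /orP[/eqP <-|/IH h].
  by rewrite le_max lexx.
by rewrite le_max h orbT.
Qed.

Definition tilt q (y : A -> R) (a : A) : R :=
  q a * expR (y a) / \sum_b q b * expR (y b).

Lemma sum_pos q : positive_dist q -> 0 < \sum_b q b.
Proof. by case=> [[_ ->] _]; exact: ltr01. Qed.

Lemma tiltZ_gt0 q (y : A -> R) : positive_dist q -> 0 < \sum_b q b * expR (y b).
Proof.
move=> [[_ q1] qp].
have [a0 _] : exists a0 : A, true.
  apply/existsP; apply: contraT; rewrite negb_exists => /forallP h.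
  move: q1; rewrite big1 //; first by move=> /eqP; rewrite eq_sym oner_eq0.
  by move=> a; have := h a.
rewrite (bigD1 a0) //=; apply: ltr_pwDl; first by rewrite mulr_gt0 ?expR_gt0.
by apply: sumr_ge0 => a _; rewrite mulr_ge0 ?expR_ge0 // ltW.
Qed.

Lemma tilt_pos q y : positive_dist q -> positive_dist (tilt q y).
Proof.
move=> hq; have Z0 := tiltZ_gt0 q y hq; case: hq => [[_ _] qp].
have tp a : 0 < tilt q y a by rewrite /tilt divr_gt0 // mulr_gt0 ?expR_gt0.
split=> //; split; first by move=> a; exact: ltW.
by rewrite /tilt -mulr_suml divff // gt_eqF.
Qed.

Lemma tilt_comp q y0 y : positive_dist q ->
  tilt (tilt q y0) y =1 tilt q (fun a => y0 a + y a).
Proof.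
move=> hq a; have Z0 := tiltZ_gt0 q y0 hq.
have Z1 := tiltZ_gt0 q (fun a => y0 a + y a) hq.
set S0 := \sum_b q b * expR (y0 b) in Z0 *.
set S1 := \sum_b q b * expR (y0 b + y b) in Z1 *.
have e : \sum_b tilt q y0 b * expR (y b) = S1 / S0.
  rewrite /S1 mulr_suml; apply: eq_bigr => b _; rewrite /tilt expRD; ring.
rewrite /tilt -/S0 -/S1 e -/S0 expRD.
field; apply/andP; split; by rewrite gt_eqF.
Qed.

Lemma mwu_tilt eta q g : mwu eta q g = tilt q (fun a => eta * g a).
Proof. by []. Qed.

Lemma state_pos (P : A -> A -> R) (eta : R) (h1 : A -> R) n : positive_dist h1 ->
  positive_dist (omwu_state P eta h1 n).1 /\ positive_dist (omwu_state P eta h1 n).2.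
Proof.
move=> h1p; elim: n => [|n]; first by [].
rewrite /=; case: (omwu_state P eta h1 n) => hat prev /= [hh _].
by split; rewrite mwu_tilt; apply: tilt_pos.
Qed.

End Basic.

Arguments bmax_ge {R A}. Arguments bmax_ge0 {R A}. Arguments bmax_le {R A}.
Arguments tilt {R A}. Arguments tiltZ_gt0 {R A}. Arguments tilt_pos {R A}.
Arguments tilt_comp {R A}. Arguments state_pos {R A}. Arguments pinsker {R A p q}.
Arguments tilt_var {R A}.
Section Game.
Variable R : realType.
Variable A : finType.
Implicit Types (F : A -> R) (p q u : A -> R).
Variable P : A -> A -> R.

Lemma Lmax_ge a b : `|P a b| <= Lmax P.
Proof.
apply: le_trans (bmax_ge (fun a => \big[Num.max/0]_b `|P a b|) a).
exact: (bmax_ge (fun b => `|P a b|) b).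
Qed.

Lemma Lmax_ge0 : 0 <= Lmax P.
Proof. exact: bmax_ge0. Qed.

Lemma sum_abs_mul (d g : A -> R) (M : R) : (forall a, `|g a| <= M) ->
  `|\sum_a d a * g a| <= M * \sum_a `|d a|.
Proof.
move=> hg; apply: le_trans (ler_norm_sum _ _ _) _.
rewrite mulr_sumr; apply: ler_sum => a _.
rewrite normrM mulrC; apply: ler_wpM2r => //.
Qed.

Lemma Pmul_bound q a : in_simplex q -> `|Pmul P q a| <= Lmax P.
Proof.
move=> [q0 q1]; rewrite /Pmul.
apply: le_trans (ler_norm_sum _ _ _) _.
rewrite -[X in _ <= X]mulr1 -q1 mulr_sumr; apply: ler_sum => b _.
by rewrite normrM (ger0_norm (q0 b)) ler_wpM2r // Lmax_ge.
Qed.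

Lemma Pmul_diff p q a :
  `|Pmul P p a - Pmul P q a| <= Lmax P * \sum_b `|p b - q b|.
Proof.
rewrite /Pmul -sumrB.
under eq_bigr do rewrite -mulrBr.
rewrite mulr_sumr; apply: le_trans (ler_norm_sum _ _ _) _; apply: ler_sum => b _.
by rewrite normrM ler_wpM2r // Lmax_ge.
Qed.

Hypothesis skP : skew_sym P.

Lemma skew_zero q : \sum_a q a * Pmul P q a = 0.
Proof.
set S := \sum_a q a * Pmul P q a.
have e : S = - S.
  rewrite {1}/S /Pmul.
  under eq_bigr do rewrite mulr_sumr.
  rewrite exchange_big /= /S /Pmul -sumrN; apply: eq_bigr => b _.
  rewrite mulr_sumr -sumrN; apply: eq_bigr => a _.
  rewrite (skP a b); ring.
lra.
Qed.

Lemma nash_nonneg ps q : nash P ps -> (forall a, 0 <= q a) ->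
  0 <= \sum_a ps a * Pmul P q a.
Proof.
move=> [_ hn] q0.
have -> : \sum_a ps a * Pmul P q a = - \sum_b q b * Pmul P ps b.
  rewrite /Pmul.
  under eq_bigr do rewrite mulr_sumr.
  rewrite exchange_big /= -sumrN; apply: eq_bigr => b _.
  rewrite mulr_sumr -sumrN; apply: eq_bigr => a _.
  rewrite (skP a b); ring.
rewrite oppr_ge0; apply: sumr_le0 => b _.
by rewrite mulr_ge0_le0.
Qed.

End Game.

Section KLlemmas.
Variable R : realType.
Variable A : finType.
Implicit Types (p q u y : A -> R).

Lemma KL_tilt u q y : (forall a, 0 <= u a) -> \sum_a u a = 1 -> positive_dist q ->
  KL u q - KL u (tilt q y) =
  \sum_a u a * y a - ln (\sum_b q b * expR (y b)).
Proof.
move=> u0 u1 hq; have Z0 := tiltZ_gt0 q y hq; case: hq => _ qp.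
set Z := \sum_b q b * expR (y b) in Z0 *.
rewrite /KL -sumrB -[ln Z]mul1r -u1 mulr_suml -sumrB; apply: eq_bigr => a _.
have [ua0|uap] := eqVneq (u a) 0; first by rewrite ua0 !mul0r subrr.
have up : 0 < u a by rewrite lt_def uap u0.
have qa := qp a.
rewrite /tilt ln_div ?posrE // ln_div ?posrE ?divr_gt0 ?mulr_gt0 ?expR_gt0 //.
rewrite ln_div ?posrE ?mulr_gt0 ?expR_gt0 // lnM ?posrE ?expR_gt0 // expRK.
ring.
Qed.

Lemma KL_self q : positive_dist q -> KL q q = 0.
Proof.
move=> [_ qp]; rewrite /KL big1 // => a _.
by rewrite divff ?gt_eqF // ln1 mulr0.
Qed.

Lemma KL_ge0 p q : positive_dist p -> positive_dist q -> 0 <= KL p q.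
Proof.
move=> [[_ p1] pp] [[_ q1] qp].
have := pinsker pp qp p1 q1; rewrite /KLd -/(KL p q) => h.
have := sqr_ge0 (\sum_a `|p a - q a|); lra.
Qed.

Lemma pinskerKL p q : positive_dist p -> positive_dist q ->
  (\sum_a `|p a - q a|) ^+ 2 <= 2 * KL p q.
Proof. by move=> [[_ p1] pp] [[_ q1] qp]; exact: (pinsker pp qp p1 q1). Qed.

Lemma KL_sym_tilt q y : positive_dist q ->
  KL q (tilt q y) + KL (tilt q y) q = \sum_a (tilt q y a - q a) * y a.
Proof.
move=> hq; have hq' := tilt_pos q y hq.
have h1 := KL_tilt q q y (fun a => ltW (hq.2 a)) hq.1.2 hq.
have h2 := KL_tilt (tilt q y) q y (fun a => ltW (hq'.2 a)) hq'.1.2 hq.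
rewrite KL_self // in h1; rewrite KL_self // in h2.
have -> : \sum_a (tilt q y a - q a) * y a = \sum_a tilt q y a * y a - \sum_a q a * y a.
  by rewrite -sumrB; apply: eq_bigr => a _; ring.
lra.
Qed.

End KLlemmas.

Section Helpers.
Variable R : realType.

Lemma exp_claim (c z : R) : `|z| <= c ->
  `|z| <= expR c * `|expR z - 1| /\ expR z * `|z| <= expR c * `|expR z - 1|.
Proof.
move=> zc; have c0 : 0 <= c by apply: le_trans zc.
have ec1 : 1 <= expR c by rewrite -expR0 ler_expR.
have hz := expR_ge1Dx z; have hnz := expR_ge1Dx (- z).
have ez0 := expR_gt0 z.
case: (lerP 0 z) => z0.
- rewrite (ger0_norm z0) ger0_norm; last by lra.
  have zc' : z <= c by move: zc; rewrite ger0_norm.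
  have ezc : expR z <= expR c by rewrite ler_expR.
  split; first by nra.
  have : expR z * z <= expR z * (expR z - 1) by apply: ler_wpM2l; lra.
  move=> h; apply: le_trans h _; apply: ler_wpM2r; lra.
- rewrite (ltr0_norm z0) ltr0_norm; last by rewrite subr_lt0 expR_lt1.
  have zc' : - z <= c by move: zc; rewrite ltr0_norm.
  have ezc : expR (- z) <= expR c by rewrite ler_expR.
  have ez1 : expR z < 1 by rewrite expR_lt1.
  have e1 : expR z * expR (- z) = 1 by rewrite -expRD subrr expR0.
  have k : expR z * (- z) <= - (expR z - 1).
    have : expR z * (- z) <= expR z * (expR (- z) - 1) by apply: ler_wpM2l; lra.
    rewrite mulrBr e1 mulr1; lra.
  split; last first.
    apply: le_trans k _; rewrite -[X in X <= _]mul1r; apply: ler_wpM2r; lra.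
  have : - z <= expR (- z) * (- (expR z - 1)).
    have := ler_wpM2l (ltW (expR_gt0 (- z))) k.
    have -> : expR (- z) * (expR z * - z) = - z.
      by rewrite mulrA [expR (- z) * _]mulrC e1 mul1r.
    by [].
  move=> h; apply: le_trans h _; apply: ler_wpM2r => //; lra.
Qed.

Lemma sqr_le_bound (u v : R) : 0 <= v -> u ^+ 2 <= v ^+ 2 -> u <= v.
Proof.
move=> v0 h; case: (lerP u 0) => u0; first by apply: le_trans u0 v0.
by rewrite -(ler_pXn2r (n:=2)) ?nnegrE // ltW.
Qed.

Lemma term_le_sum (A : finType) (F : A -> R) a : (forall b, 0 <= F b) ->
  F a <= \sum_b F b.
Proof.
move=> F0; rewrite (bigD1 a) //= lerDl; apply: sumr_ge0 => b _; exact: F0.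
Qed.

End Helpers.

Arguments bmax_ge {R A}. Arguments bmax_ge0 {R A}. Arguments bmax_le {R A}.
Arguments tilt {R A}. Arguments tiltZ_gt0 {R A}. Arguments tilt_pos {R A}.
Arguments tilt_comp {R A}. Arguments state_pos {R A}. Arguments pinsker {R A p q}.
Arguments tilt_var {R A}.
Arguments Lmax_ge {R A}. Arguments Lmax_ge0 {R A}. Arguments sum_abs_mul {R A}.
Arguments Pmul_bound {R A}. Arguments Pmul_diff {R A}. Arguments skew_zero {R A}.
Arguments nash_nonneg {R A}. Arguments KL_tilt {R A}. Arguments KL_self {R A}.
Arguments KL_ge0 {R A}. Arguments pinskerKL {R A}. Arguments KL_sym_tilt {R A}.
Arguments exp_claim {R}. Arguments sqr_le_bound {R}. Arguments term_le_sum {R A}.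

Section Core.
Variable R : realType.
Variable A : finType.
Variable P : A -> A -> R.
Hypothesis skP : skew_sym P.
Variable eta : R.

Lemma decrease (h p0 ps p h' : A -> R) : positive_dist h -> positive_dist p0 -> nash P ps ->
  0 < eta -> eta * Lmax P < 1/2 ->
  p = mwu eta h (Pmul P p0) -> h' = mwu eta h (Pmul P p) ->
  (1 - 4 * (eta ^+ 2 * Lmax P ^+ 2)) * (KL h' p + KL p h)
  <= (KL ps h + 4 * (eta ^+ 2 * Lmax P ^+ 2) * KL h p0)
     - (KL ps h' + 4 * (eta ^+ 2 * Lmax P ^+ 2) * KL h' p).
Proof.
move=> hh hp0 hps eta0 etaL Ep Eh0.
set L := Lmax P.
have L0 : 0 <= L := Lmax_ge0 P.
set X := eta ^+ 2 * L ^+ 2.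
have X0 : 0 <= X by rewrite mulr_ge0 // sqr_ge0.
have X1 : 4 * X <= 1.
  have eL0 : 0 <= eta * L by rewrite mulr_ge0 // ltW.
  have e2 : eta * L * 2 < 1 by rewrite -ltr_pdivlMr.
  rewrite /X -exprMn; nra.
pose g0 := Pmul P p0. pose g := Pmul P p.
pose y0 := fun a => eta * g0 a. pose y1 := fun a => eta * g a.
have hp : positive_dist p by rewrite Ep; apply: tilt_pos.
have hh' : positive_dist h' by rewrite Eh0; apply: tilt_pos.
set Z := \sum_b h b * expR (y1 b).
have S1 : KL ps h - KL ps h' = \sum_a ps a * y1 a - ln Z.
  by rewrite Eh0; apply: KL_tilt => //; [exact: hps.1.1 | exact: hps.1.2].
have S2 : KL p h - KL p h' = \sum_a p a * y1 a - ln Z.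
  by rewrite Eh0; apply: KL_tilt => //; [move=> a; exact: ltW (hp.2 a) | exact: hp.1.2].
have Sp : \sum_a p a * y1 a = 0.
  rewrite /y1; under eq_bigr do rewrite mulrCA.
  by rewrite -mulr_sumr skew_zero // mulr0.
have Sps : 0 <= \sum_a ps a * y1 a.
  rewrite /y1; under eq_bigr do rewrite mulrCA.
  rewrite -mulr_sumr mulr_ge0 ?(ltW eta0) //.
  by apply: nash_nonneg => // a; exact: ltW (hp.2 a).
pose w := fun a => y1 a - y0 a.
have Eh' : h' = tilt p w.
  apply/funext => a.
  transitivity (tilt (tilt h y0) w a); last by rewrite Ep.
  rewrite (tilt_comp h y0 w hh a).
  have -> : (fun a => y0 a + w a) = y1 by apply/funext => b; rewrite /w; ring.
  by rewrite Eh0.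
have S5 : KL p h' + KL h' p <= X * (\sum_a `|p a - p0 a|) ^+ 2.
  rewrite Eh' KL_sym_tilt //.
  have := tilt_var p w (eta * L * \sum_a `|p a - p0 a|) hp.2 hp.1.2.
  rewrite /X -!exprMn; apply.
  move=> a; rewrite /w /y1 /y0 -mulrBr normrM (gtr0_norm eta0) -mulrA.
  by apply: ler_wpM2l; [exact: ltW | exact: Pmul_diff].
have S6 : (\sum_a `|p a - p0 a|) ^+ 2 <= 4 * KL p h + 4 * KL h p0.
  have t1 : \sum_a `|p a - p0 a| <= \sum_a `|p a - h a| + \sum_a `|h a - p0 a|.
    rewrite -big_split; apply: ler_sum => a _.
    have -> : p a - p0 a = (p a - h a) + (h a - p0 a) by ring.
    exact: ler_normD.
  have d0 : 0 <= \sum_a `|p a - p0 a| by apply: sumr_ge0 => a _.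
  have b0 : 0 <= \sum_a `|p a - h a| by apply: sumr_ge0 => a _.
  have c0 : 0 <= \sum_a `|h a - p0 a| by apply: sumr_ge0 => a _.
  have pb := pinskerKL p h hp hh.
  have pc := pinskerKL h p0 hh hp0.
  move: t1 d0 b0 c0 pb pc.
  set d := \sum_a `|p a - p0 a|; set b := \sum_a `|p a - h a|; set c := \sum_a `|h a - p0 a|.
  move=> t1 d0 b0 c0 pb pc.
  have : d ^+ 2 <= (b + c) ^+ 2 by rewrite lerXn2r // ?nnegrE // addr_ge0.
  have := sqr_ge0 (b - c).
  have Bp : 0 <= KL p h by exact: KL_ge0.
  nra.
have S6' : X * (\sum_a `|p a - p0 a|) ^+ 2 <= X * (4 * KL p h + 4 * KL h p0).
  exact: ler_wpM2l.
lra.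
Qed.

Lemma dist_le1 (q : A -> R) a : positive_dist q -> q a <= 1.
Proof.
move=> [[q0 q1] _]; rewrite -q1; exact: term_le_sum.
Qed.

Lemma Kbound (h p0 p h' : A -> R) : positive_dist h -> positive_dist p0 ->
  0 < eta -> eta * Lmax P < 1/2 ->
  p = mwu eta h (Pmul P p0) -> h' = mwu eta h (Pmul P p) ->
  Num.max (\big[Num.max/0]_(a : A) (h a * `|eta * Pmul P p a|))
          (\big[Num.max/0]_(a : A) (h' a * `|eta * Pmul P p a|))
  <= (Num.sqrt 2 * eta * Lmax P + 2 * expR (2 * eta * Lmax P))
     * Num.sqrt (KL h' p + KL p h).
Proof.
move=> hh hp0 eta0 etaL Ep Eh0.
set L := Lmax P.
have L0 : 0 <= L := Lmax_ge0 P.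
have eL0 : 0 <= eta * L by rewrite mulr_ge0 // ltW.
have hp : positive_dist p by rewrite Ep; apply: tilt_pos.
have hh' : positive_dist h' by rewrite Eh0; apply: tilt_pos.
pose g := Pmul P p.
pose y1 := fun a => eta * g a.
have gL a : `|g a| <= L by apply: Pmul_bound; exact: hp.1.
have y1L a : `|y1 a| <= eta * L.
  by rewrite /y1 normrM (gtr0_norm eta0); apply: ler_wpM2l; [exact: ltW|exact: gL].
set Z := \sum_b h b * expR (y1 b).
have Z0 : 0 < Z by apply: tiltZ_gt0.
have Eh1 : h' = tilt h y1 by rewrite Eh0.
set SS := KL h' p + KL p h.
have SS0 : 0 <= SS by rewrite addr_ge0 // KL_ge0.
set s := Num.sqrt SS.
have s0 : 0 <= s := sqrtr_ge0 SS.
have ss : s ^+ 2 = SS by rewrite sqr_sqrtr.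
have r2 : Num.sqrt 2 ^+ 2 = 2 :> R by rewrite sqr_sqrtr.
have r20 : 0 <= Num.sqrt 2 :> R := sqrtr_ge0 2.
set a1 := \sum_a `|h' a - p a|.
set b := \sum_a `|p a - h a|.
have a10 : 0 <= a1 by apply: sumr_ge0.
have b0 : 0 <= b by apply: sumr_ge0.
have pa := pinskerKL h' p hh' hp.
have pb := pinskerKL p h hp hh.
have KA := KL_ge0 h' p hh' hp.
have KB := KL_ge0 p h hp hh.
have a1s : a1 <= Num.sqrt 2 * s.
  apply: sqr_le_bound; first by rewrite mulr_ge0.
  rewrite exprMn r2 ss -/a1 /SS in pa *; lra.
have bs : b <= Num.sqrt 2 * s.
  apply: sqr_le_bound; first by rewrite mulr_ge0.
  rewrite exprMn r2 ss -/b /SS in pb *; lra.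
have abs : a1 + b <= 2 * s.
  apply: sqr_le_bound; first by rewrite mulr_ge0.
  rewrite exprMn ss -/a1 -/b /SS in pa pb *.
  have := sqr_ge0 (a1 - b); nra.
have Sp : \sum_a p a * y1 a = 0.
  rewrite /y1; under eq_bigr do rewrite mulrCA.
  by rewrite -mulr_sumr skew_zero // mulr0.
have lo : - (eta * L * b) <= ln Z.
  have h1 := KL_tilt h h y1 (fun a => ltW (hh.2 a)) hh.1.2 hh.
  rewrite KL_self // -Eh1 in h1.
  have k := KL_ge0 h h' hh hh'.
  have e : \sum_a (h a - p a) * y1 a = \sum_a h a * y1 a.
    have -> : \sum_a (h a - p a) * y1 a = \sum_a h a * y1 a - \sum_a p a * y1 a.
      by rewrite -sumrB; apply: eq_bigr => a _; ring.
    by rewrite Sp subr0.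
  have := sum_abs_mul (fun a => h a - p a) y1 (eta * L) y1L.
  have -> : \sum_a `|h a - p a| = b by apply: eq_bigr => a _; rewrite distrC.
  rewrite e => /ler_normlP [h2 _]; lra.
have up : ln Z <= eta * L * a1.
  have h1 := KL_tilt h' h y1 (fun a => ltW (hh'.2 a)) hh'.1.2 hh.
  rewrite -Eh1 KL_self // in h1.
  have k := KL_ge0 h' h hh' hh.
  have e : \sum_a (h' a - p a) * y1 a = \sum_a h' a * y1 a.
    have -> : \sum_a (h' a - p a) * y1 a = \sum_a h' a * y1 a - \sum_a p a * y1 a.
      by rewrite -sumrB; apply: eq_bigr => a _; ring.
    by rewrite Sp subr0.
  have := sum_abs_mul (fun a => h' a - p a) y1 (eta * L) y1L.
  rewrite e => /ler_normlP [_ h2]; rewrite -/a1 in h2; rewrite -/Z in h1; lra.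
have lnZs : `|ln Z| <= eta * L * (Num.sqrt 2 * s).
  apply/ler_normlP; split.
    have : eta * L * b <= eta * L * (Num.sqrt 2 * s) by apply: ler_wpM2l.
    lra.
  apply: le_trans up _; exact: ler_wpM2l.
have lnZL : `|ln Z| <= eta * L.
  have hs : forall c : R, (forall a, y1 a <= c) -> Z <= expR c.
    move=> c hc; rewrite -[expR c]mul1r -hh.1.2 mulr_suml; apply: ler_sum => a _.
    by apply: ler_wpM2l; [exact: ltW (hh.2 a) | rewrite ler_expR].
  have hi : forall c : R, (forall a, c <= y1 a) -> expR c <= Z.
    move=> c hc; rewrite -[expR c]mul1r -hh.1.2 mulr_suml; apply: ler_sum => a _.
    by apply: ler_wpM2l; [exact: ltW (hh.2 a) | rewrite ler_expR].
  apply/ler_normlP; split.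
    have : expR (- (eta * L)) <= Z.
      by apply: hi => a; have := y1L a; move/ler_normlP => [? _]; lra.
    move=> hz; suff : - (eta * L) <= ln Z by lra.
    by rewrite -ler_expR lnK ?posrE.
  have : Z <= expR (eta * L).
    by apply: hs => a; have := y1L a; move/ler_normlP => [_ ?].
  by move=> hz; rewrite -ler_expR lnK ?posrE.
set den := Num.sqrt 2 * eta * L + 2 * expR (2 * eta * L).
have E1 : 1 <= expR (2 * eta * L) by rewrite -expR0 ler_expR mulr_ge0 // mulr_ge0 // ltW.
have den0' : 0 <= den.
  rewrite /den; apply: addr_ge0; first by rewrite -mulrA; apply: mulr_ge0.
  by apply: mulr_ge0; [|exact: expR_ge0].
have den0 := mulr_ge0 den0' s0.
have key : forall a, h a * `|y1 a| <= den * s /\ h' a * `|y1 a| <= den * s.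
  move=> a.
  set z := y1 a - ln Z.
  have zc : `|z| <= 2 * eta * L.
    apply: le_trans (ler_normB _ _) _; have := y1L a; lra.
  have [c1 c2] := exp_claim (2 * eta * L) z zc.
  have ez : h' a = h a * expR z.
    by rewrite Eh1 /tilt -/Z /z expRD expRN lnK ?posrE // mulrA.
  have ha0 : 0 < h a := hh.2 a.
  have ha1 : h a <= 1 := dist_le1 h a hh.
  have h'a1 : h' a <= 1 := dist_le1 h' a hh'.
  have D1 : `|h' a - h a| = h a * `|expR z - 1|.
    by rewrite ez -[X in _ - X]mulr1 -mulrBr normrM (gtr0_norm ha0).
  have D2 : `|h' a - h a| <= a1 + b.
    apply: le_trans (term_le_sum (fun a => `|h' a - h a|) a _) _ => //.
    rewrite /a1 /b -big_split; apply: ler_sum => c _.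
    have -> : h' c - h c = (h' c - p c) + (p c - h c) by ring.
    exact: ler_normD.
  have yz : `|y1 a| <= `|z| + `|ln Z|.
    have -> : y1 a = z + ln Z by rewrite /z; ring.
    exact: ler_normD.
  have lnZ0 : 0 <= `|ln Z| := normr_ge0 _.
  have t1 : h a * `|z| <= expR (2 * eta * L) * `|h' a - h a|.
    rewrite D1 mulrCA; apply: ler_wpM2l => //; exact: ltW.
  have t2 : h' a * `|z| <= expR (2 * eta * L) * `|h' a - h a|.
    rewrite D1 ez -mulrA.
    have -> : expR (2 * eta * L) * (h a * `|expR z - 1|) =
       h a * (expR (2 * eta * L) * `|expR z - 1|) by ring.
    apply: ler_wpM2l => //; exact: ltW.
  have t3 : expR (2 * eta * L) * `|h' a - h a| <= expR (2 * eta * L) * (2 * s).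
    apply: ler_wpM2l; [exact: expR_ge0 | exact: le_trans D2 abs].
  have eden : den * s = 2 * expR (2 * eta * L) * s + eta * L * (Num.sqrt 2 * s).
    rewrite /den; ring.
  have h'0 : 0 < h' a := hh'.2 a.
  split.
  - have : h a * `|y1 a| <= h a * `|z| + h a * `|ln Z|.
      by rewrite -mulrDr; apply: ler_wpM2l => //; exact: ltW.
    have : h a * `|ln Z| <= `|ln Z|.
      by rewrite -[X in _ <= X]mul1r; apply: ler_wpM2r.
    rewrite eden; lra.
  - have : h' a * `|y1 a| <= h' a * `|z| + h' a * `|ln Z|.
      by rewrite -mulrDr; apply: ler_wpM2l => //; exact: ltW.
    have : h' a * `|ln Z| <= `|ln Z|.
      by rewrite -[X in _ <= X]mul1r; apply: ler_wpM2r.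
    rewrite eden; lra.
rewrite ge_max; apply/andP; split; apply: bmax_le => // a.
  exact: (key a).1.
exact: (key a).2.
Qed.
End Core.

Theorem mainTheorem16 (R : realType) (A : finType) (P : A -> A -> R)
  (eta : R) (h1 pistar : A -> R) :
  skew_sym P ->
  full_support P ->
  0 < eta ->
  eta * Lmax P < 1 / 2 ->
  positive_dist h1 ->
  (* pistar = p(hatpi^(1)) : a KL-projection of hatpi^(1) onto the Nash set *)
  nash P pistar ->
  (forall p, nash P p -> KL pistar h1 <= KL p h1) ->
  forall t : nat, (1 <= t)%N ->
    Theta P eta h1 pistar t - Theta P eta h1 pistar t.+1 >=
      (1 - 4 * eta ^+ 2 * Lmax P ^+ 2)
        / (Num.sqrt 2 * eta * Lmax P + 2 * expR (2 * eta * Lmax P)) ^+ 2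
      * Num.max (Khat P eta h1 t.+1) (Kt P eta h1 t.+1) ^+ 2.
Proof.
move=> skP _ eta0 etaL h1p nps _ t t1.
case: t t1 => // n _.
have [hn1 hn2] := state_pos P eta h1 n h1p.
case E: (omwu_state P eta h1 n) hn1 hn2 => [h p0] /= hh hp0.
set p := mwu eta h (Pmul P p0).
set h' := mwu eta h (Pmul P p).
have Eh : hatpi P eta h1 n.+1 = h by rewrite /hatpi /= E.
have Ep0 : pit P eta h1 n = p0 by rewrite /pit E.
have Ep : pit P eta h1 n.+1 = p by rewrite /pit /= E.
have Eh' : hatpi P eta h1 n.+2 = h' by rewrite /hatpi /= E.
rewrite /Theta /Kt /Khat !succnK Eh Ep0 Ep Eh'.
have dec := @decrease R A P skP eta h p0 pistar p h' hh hp0 nps eta0 etaL (erefl _) (erefl _).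
have kb := @Kbound R A P skP eta h p0 p h' hh hp0 eta0 etaL (erefl _) (erefl _).
set L := Lmax P in dec kb *.
set den := Num.sqrt 2 * eta * L + 2 * expR (2 * eta * L) in kb *.
set M := Num.max _ _ in kb *.
set SS := KL h' p + KL p h in dec kb *.
set X := 4 * eta ^+ 2 * L ^+ 2.
have e4 : 4 * (eta ^+ 2 * L ^+ 2) = X by rewrite /X mulrA.
rewrite e4 in dec.
have L0 : 0 <= L := @Lmax_ge0 R A P.
have hp : positive_dist p by apply: tilt_pos.
have hh' : positive_dist h' by apply: tilt_pos.
have SS0 : 0 <= SS by apply: addr_ge0; apply: KL_ge0.
have M0 : 0 <= M by rewrite le_max (@bmax_ge0 R A).
have denp : 0 < den.
  rewrite /den; apply: ltr_wpDl; first by rewrite -mulrA; apply: mulr_ge0 => //; apply: mulr_ge0 => //; exact: ltW.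
  by rewrite mulr_gt0 // expR_gt0.
have X1 : X <= 1.
  have eL0 : 0 <= eta * L by rewrite mulr_ge0 // ltW.
  have e2 : eta * L * 2 < 1 by rewrite -ltr_pdivlMr.
  have -> : X = 4 * (eta * L) ^+ 2 by rewrite /X; ring.
  nra.
have M2 : M ^+ 2 <= den ^+ 2 * SS.
  have := ler_pM M0 M0 kb kb.
  by rewrite -!expr2 exprMn sqr_sqrtr.
have C0 : 0 <= (1 - X) / den ^+ 2 by rewrite divr_ge0 ?sqr_ge0 //; lra.
apply: le_trans dec.
apply: le_trans (ler_wpM2l C0 M2) _.
rewrite mulrA divfK ?sqrf_eq0 ?gt_eqF //.
Qed.
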